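(* Let $T_1,T_2$ be tables joined on column $J$, $T_1$ having a real-valued column $W$, let $\epsilon_1,\epsilon_2\in(0,1]$ and $p\in[\max\{\epsilon_1,\epsilon_2\},1]$. If $S_1=\mathrm{UBS}_{p,\epsilon_1/p}(T_1,J)$, $S_2=\mathrm{UBS}_{p,\epsilon_2/p}(T_2,J)$ and $\hat J_{\mathrm{sum}}=\frac{p}{\epsilon_1\epsilon_2}\sum_{(t_1,t_2)\in S_1\bowtie_J S_2}t_1.W$, then $$\mathrm{Var}[\hat J_{\mathrm{sum}}]=\Big(\frac1{\epsilon_2}-\frac1p\Big)\beta_1+\Big(\frac1{\epsilon_1}-\frac1p\Big)\beta_2+\Big(\frac{p}{\epsilon_1\epsilon_2}-\frac1{\epsilon_1}-\frac1{\epsilon_2}+\frac1p\Big)\beta_3+\Big(\frac1p-1\Big)\beta_4,$$ where $\beta_1=\sum_v a_v^2\mu_v^2b_v$, $\beta_2=\sum_v a_v(\mu_v^2+\sigma_v^2)b_v^2$, $\beta_3=\sum_v a_v(\mu_v^2+\sigma_v^2)b_v$, $\beta_4=\sum_v a_v^2\mu_v^2b_v^2$.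
   Context: $T_1,T_2$ are finite multisets of tuples with a join attribute $J$ taking values in a finite set $\mathcal U$; $a_v$ (resp. $b_v$) is the number of tuples of $T_1$ (resp. $T_2$) with $J$-value $v$. For each $v$ with $a_v>0$, $\mu_v$ and $\sigma_v^2$ are the mean and (population) variance of the $W$-values of the tuples of $T_1$ with $J$-value $v$; terms with $a_v=0$ contribute $0$. $X\bowtie_J Y$ is the set of pairs $(t_1,t_2)\in X\times Y$ with $t_1.J=t_2.J$. $\mathrm{UBS}_{p,q}(T,J)$: given a hash function $h:\mathcal U\to[0,1]$, each tuple $t\in T$ with $h(t.J)<p$ is included independently with probability $q$; others are excluded. The values $h(v)$ are independent uniform on $[0,1]$, the same $h$ is used for both tables, and the Bernoulli coins are independent across all tuples and independent of $h$. *)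

(* Defs.v *)
From HB Require Import structures.
From mathcomp Require Import all_boot all_order all_algebra.
From mathcomp Require Import all_classical all_reals all_analysis.
Set Implicit Arguments. Unset Strict Implicit. Unset Printing Implicit Defensive.
Import Order.TTheory GRing.Theory Num.Theory.
Local Open Scope classical_set_scope.
Local Open Scope ring_scope.

(* Mutual independence of a finite family of real random variables:
   the product rule for every choice of Borel sets (choosing [setT]
   for some indices gives the rule for every subfamily). *)
Definition mutually_independent {d} {Omega : measurableType d} {R : realType}
  (P : probability Omega R) {I : finType} (X : I -> Omega -> R) : Prop :=
  forall A : I -> set R, (forall i, measurable (A i)) ->
    P (\bigcap_(i in [set: I]) (X i @^-1` A i)) =
    (\prod_(i : I) P (X i @^-1` A i))%E.

Definition uniform01 {d} {Omega : measurableType d} {R : realType}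
  (P : probability Omega R) (X : Omega -> R) : Prop :=
  forall A : set R, measurable A ->
    P (X @^-1` A) = (@lebesgue_measure R) (A `&` `[0%R, 1%R]).

Definition bernoulli_coin {d} {Omega : measurableType d} {R : realType}
  (P : probability Omega R) (q : R) (X : Omega -> R) : Prop :=
  P (X @^-1` [set 1%R]) = q%:E /\ P (X @^-1` [set 0%R]) = (1 - q)%:E.

(* Tables: T1 (resp. T2) is a finite index type of tuples (a multiset),
   J1 / J2 give the join attribute, W the W-column of T1. *)
Section stats.
Variables (R : realType) (U T1 T2 : finType) (J1 : T1 -> U) (J2 : T2 -> U)
  (W : T1 -> R).

Definition a_ (v : U) : R := #|[set t : T1 | J1 t == v]|%:R.
Definition b_ (v : U) : R := #|[set t : T2 | J2 t == v]|%:R.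
(* mean / population variance of W over tuples of T1 with J = v;
   when a_v = 0 these are 0 (and every term they appear in has a factor a_v). *)
Definition mu_ (v : U) : R := (\sum_(t : T1 | J1 t == v) W t) / a_ v.
Definition sigma2_ (v : U) : R :=
  (\sum_(t : T1 | J1 t == v) (W t - mu_ v) ^+ 2) / a_ v.

Definition beta1 : R := \sum_(v : U) a_ v ^+ 2 * mu_ v ^+ 2 * b_ v.
Definition beta2 : R := \sum_(v : U) a_ v * (mu_ v ^+ 2 + sigma2_ v) * b_ v ^+ 2.
Definition beta3 : R := \sum_(v : U) a_ v * (mu_ v ^+ 2 + sigma2_ v) * b_ v.
Definition beta4 : R := \sum_(v : U) a_ v ^+ 2 * mu_ v ^+ 2 * b_ v ^+ 2.
End stats.

(* The joined estimator.  h v w : hash value of v in outcome w;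
   c1 t w, c2 t w : Bernoulli coin of tuple t.  A tuple t of T1 is in S1
   iff h (J1 t) < p and its coin is 1 (similarly for T2). *)
Definition Jsum_hat {d} {Omega : measurableType d} {R : realType}
  (U T1 T2 : finType) (J1 : T1 -> U) (J2 : T2 -> U) (W : T1 -> R)
  (p e1 e2 : R) (h : U -> Omega -> R) (c1 : T1 -> Omega -> R)
  (c2 : T2 -> Omega -> R) : Omega -> R :=
  fun w => p / (e1 * e2) *
    \sum_(t1 : T1) \sum_(t2 : T2 | J1 t1 == J2 t2)
      ((h (J1 t1) w < p) && (c1 t1 w == 1) &&
       (h (J2 t2) w < p) && (c2 t2 w == 1))%:R * W t1.

Definition all_rvs {Omega : Type} {R : Type} (U T1 T2 : Type)
  (h : U -> Omega -> R) (c1 : T1 -> Omega -> R) (c2 : T2 -> Omega -> R)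
  (i : U + (T1 + T2)) : Omega -> R :=
  match i with
  | inl v => h v
  | inr (inl t) => c1 t
  | inr (inr t) => c2 t
  end.

(* Main.v *)
Require Import Defs.
From HB Require Import structures.
From mathcomp Require Import all_boot all_order all_algebra.
From mathcomp Require Import all_classical all_reals all_analysis.
From mathcomp Require Import ring lra.
Import Order.TTheory GRing.Theory Num.Theory.
Local Open Scope classical_set_scope.
Local Open Scope ring_scope.
Section L.
Context {R : realType} {d : measure_display} {Omega : measurableType d} (P : probability Omega R).

Lemma int_lincomb (I : finType) (r : I -> R) (A : I -> set Omega) :
  (forall i, measurable (A i)) ->
  (\int[P]_w (\sum_i r i * \1_(A i) w)%:E)%E = (\sum_i r i * fine (P (A i)))%:E.
Proof.
move=> mA.
under eq_integral do rewrite -sumEFin.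
rewrite integral_sum //; last first.
  move=> i; under eq_fun do rewrite EFinM.
  apply: integrableZl; [exact: measurableT | exact: integrable_indic].
rewrite -(@sumEFin R). apply: eq_bigr => i _.
under eq_integral do rewrite EFinM.
rewrite integralZl //; last exact: integrable_indic.
rewrite integral_indic // setIT EFinM fineK //. exact: fin_num_measure.
Qed.
Lemma sum_option (K : finType) (F : option K -> R) :
  \sum_(o : option K) F o = F None + \sum_k F (Some k).
Proof.
rewrite (bigD1 None) //=; congr (_ + _).
rewrite (reindex_omap Some id) //=.
- by apply: eq_bigl => k; rewrite eqxx.
- by case.
Qed.

Lemma var_lincomb (I : finType) (r : I -> R) (A : I -> set Omega) :
  (forall i, measurable (A i)) ->
  'V_P[fun w => \sum_i r i * \1_(A i) w] =
  (\sum_i \sum_j r i * r j * fine (P (A i `&` A j))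
   - (\sum_i r i * fine (P (A i))) ^+ 2)%:E.
Proof.
move=> mA.
set X := fun w => _.
set m := \sum_i r i * fine (P (A i)).
have EX : ('E_P[X])%E = m%:E by rewrite unlock; exact: int_lincomb.
pose b (o : option I) := if o is Some i then r i else - m.
pose B (o : option I) := if o is Some i then A i else setT.
have mB : forall o, measurable (B o) by case=> [i|]; [exact: mA | exact: measurableT].
rewrite /variance unlock EX /= unlock.
have pw : forall w, ((X \- cst m) * (X \- cst m))%R w =
    \sum_(o : option I * option I) (b o.1 * b o.2) * \1_(B o.1 `&` B o.2) w.
  move=> w.
  have Xm : X w - m = \sum_o b o * \1_(B o) w.
    by rewrite sum_option /= /indic /= mem_set // mulr1 addrC.
  have -> : ((X \- cst m) * (X \- cst m))%R w = (X w - m) * (X w - m) by [].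
  rewrite Xm mulr_suml -(pair_bigA _ (fun o o' => b o * b o' * \1_(B o `&` B o') w)) /=; apply: eq_bigr => o _.
  rewrite mulr_sumr; apply: eq_bigr => o' _.
  by rewrite indicI /= mulrACA.
under eq_integral do rewrite pw.
rewrite int_lincomb; last by move=> o; apply: measurableI.
congr (_%:E).
rewrite -(pair_bigA _ (fun o o' => b o * b o' * fine (P (B o `&` B o')))) /= sum_option /= sum_option /=.
under [X in _ + X = _]eq_bigr do rewrite sum_option /=.
rewrite setIT probability_setT /=.
under eq_bigr do rewrite setTI.
under [X in _ + X = _]eq_bigr do rewrite setIT.
rewrite big_split /=.
have -> : \sum_i r i * - m * fine (P (A i)) = - m * m.
  by rewrite /m mulr_sumr; apply: eq_bigr => i _; rewrite mulrCA mulrA.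
have -> : \sum_i (- m * r i * fine (P (A i))) = - m * m.
  by rewrite /m mulr_sumr; apply: eq_bigr => i _; rewrite mulrA.
rewrite expr2; ring.
Qed.
End L.
Lemma prod2 {R : realType} (T : finType) (a b : T) (x : R) :
  \prod_(t : T) (if (t == a) || (t == b) then x else 1) = if a == b then x else x ^+ 2.
Proof.
rewrite (bigD1 a) //= eqxx /=.
have [<-|ab] := eqVneq a b.
  rewrite big1 ?mulr1 // => t /negbTE ->; by [].
rewrite (bigD1 b) /=; last by rewrite eq_sym.
rewrite eqxx orbT big1 ?mulr1 ?expr2 // => t /andP[/negbTE -> /negbTE ->]. by [].
Qed.

Section Prob.
Context {R : realType} {d : measure_display} {Omega : measurableType d} (P : probability Omega R)
  (U T1 T2 : finType) (J1 : T1 -> U) (p q1 q2 : R)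
  (h : U -> Omega -> R) (c1 : T1 -> Omega -> R) (c2 : T2 -> Omega -> R)
  (hmeas : forall i, measurable_fun setT (all_rvs h c1 c2 i))
  (hind : mutually_independent P (all_rvs h c1 c2))
  (hu : forall u, P (h u @^-1` [set x | x < p]) = p%:E)
  (hq1 : forall t, P (c1 t @^-1` [set 1]) = q1%:E)
  (hq2 : forall t, P (c2 t @^-1` [set 1]) = q2%:E).

Definition Ev (k : T1 * T2) : set Omega :=
  [set w | h (J1 k.1) w < p /\ c1 k.1 w = 1 /\ c2 k.2 w = 1].

Lemma measurable_lt : measurable [set x : R | x < p].
Proof.
have -> : [set x : R | x < p] = [set` `]-oo, p[%R].
  by apply/seteqP; split => x /=; rewrite in_itv.
exact: measurable_itv.
Qed.

Lemma mpre i (S : set R) : measurable S -> measurable (all_rvs h c1 c2 i @^-1` S).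
Proof. move=> mS; have := hmeas i measurableT S mS; by rewrite setTI. Qed.

Lemma measurable_Ev k : measurable (Ev k).
Proof.
have -> : Ev k = (h (J1 k.1) @^-1` [set x | x < p]) `&`
   ((c1 k.1 @^-1` [set 1]) `&` (c2 k.2 @^-1` [set 1])).
  by apply/seteqP; split => w /=.
apply: measurableI; first exact: (mpre (inl (J1 k.1)) _ measurable_lt).
apply: measurableI; first exact: (mpre (inr (inl k.1)) _ (measurable_set1 _)).
exact: (mpre (inr (inr k.2)) _ (measurable_set1 _)).
Qed.

Lemma P_Ev2 k k' : fine (P (Ev k `&` Ev k')) =
  (if J1 k.1 == J1 k'.1 then p else p ^+ 2) *
  (if k.1 == k'.1 then q1 else q1 ^+ 2) *
  (if k.2 == k'.2 then q2 else q2 ^+ 2).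
Proof.
case: k k' => t1 t2 [t1' t2'] /=.
pose S (i : U + (T1 + T2)) : set R := match i with
  | inl u => if (u == J1 t1) || (u == J1 t1') then [set x | x < p] else setT
  | inr (inl t) => if (t == t1) || (t == t1') then [set 1] else setT
  | inr (inr t) => if (t == t2) || (t == t2') then [set 1] else setT end.
have mS : forall i, measurable (S i).
  case=> [u|[t|t]] /=; case: ifP => _ //; exact: measurable_lt || exact: measurable_set1.
have -> : Ev (t1, t2) `&` Ev (t1', t2') =
    \bigcap_(i in [set: U + (T1 + T2)]) (all_rvs h c1 c2 i @^-1` S i).
  apply/seteqP; split.
    move=> w [[H1 [C1 D1]] [H2 [C2 D2]]] i _.
    case: i => [u|[t|t]] /=; case: ifP => //; by case/orP => /eqP ->.
  move=> w Hw; split; split.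
  - by have := Hw (inl (J1 t1)) I; rewrite /= eqxx.
  - split; first by have := Hw (inr (inl t1)) I; rewrite /= eqxx.
    by have := Hw (inr (inr t2)) I; rewrite /= eqxx.
  - by have := Hw (inl (J1 t1')) I; rewrite /= eqxx orbT.
  - split; first by have := Hw (inr (inl t1')) I; rewrite /= eqxx orbT.
    by have := Hw (inr (inr t2')) I; rewrite /= eqxx orbT.
rewrite hind // !big_sumType /=.
have E1 : forall u, P (h u @^-1` S (inl u)) =
    (if (u == J1 t1) || (u == J1 t1') then p else 1)%:E.
  by move=> u /=; case: ifP => _; rewrite ?hu // preimage_setT probability_setT.
have E2 : forall t, P (c1 t @^-1` S (inr (inl t))) =
    (if (t == t1) || (t == t1') then q1 else 1)%:E.
  by move=> t /=; case: ifP => _; rewrite ?hq1 // preimage_setT probability_setT.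
have E3 : forall t, P (c2 t @^-1` S (inr (inr t))) =
    (if (t == t2) || (t == t2') then q2 else 1)%:E.
  by move=> t /=; case: ifP => _; rewrite ?hq2 // preimage_setT probability_setT.
under eq_bigr do rewrite E1.
under [X in (_ * (X * _))%E]eq_bigr do rewrite E2.
under [X in (_ * (_ * X))%E]eq_bigr do rewrite E3.
by rewrite !prodEFin -!EFinM /= !prod2 mulrA.
Qed.
End Prob.
Section Alg.
Context {R : realType} (U T1 T2 : finType) (J1 : T1 -> U) (J2 : T2 -> U) (W : T1 -> R).

Lemma card_sum (T : finType) (J : T -> U) v :
  \sum_(t | J t == v) (1 : R) = #|[set t | J t == v]|%:R.
Proof.
rewrite sumr_const; congr (_%:R); apply: eq_card => t.
by apply/idP/idP => [H|H]; [apply: mem_set|move/set_mem: H].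
Qed.

Lemma a0_empty v t : a_ R J1 v = 0 -> J1 t == v -> False.
Proof.
move=> a0 Ht; have Ht' : t \in [set t | J1 t == v] by apply: mem_set.
by move/eqP: a0; rewrite /a_ pnatr_eq0 (cardD1 t) Ht'.
Qed.

Lemma a_mu v : a_ R J1 v * mu_ J1 W v = \sum_(t | J1 t == v) W t.
Proof.
rewrite /mu_; have [a0|an0] := eqVneq (a_ R J1 v) 0.
  rewrite a0 mul0r; symmetry; apply: big1 => t Ht; exfalso; exact: (a0_empty _ _ a0 Ht).
by rewrite mulrC divfK.
Qed.

Lemma a_musig v : a_ R J1 v * (mu_ J1 W v ^+ 2 + sigma2_ J1 W v) =
  \sum_(t | J1 t == v) W t ^+ 2.
Proof.
rewrite /sigma2_; have [a0|an0] := eqVneq (a_ R J1 v) 0.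
  rewrite a0 mul0r; symmetry; apply: big1 => t Ht; exfalso; exact: (a0_empty _ _ a0 Ht).
rewrite mulrDr [_ * (_ / _)]mulrC divfK //.
have -> : \sum_(t | J1 t == v) (W t - mu_ J1 W v) ^+ 2 =
  \sum_(t | J1 t == v) W t ^+ 2 - 2 * mu_ J1 W v * \sum_(t | J1 t == v) W t
  + mu_ J1 W v ^+ 2 * \sum_(t | J1 t == v) 1.
  rewrite mulr_sumr mulr_sumr -sumrB -big_split /=; apply: eq_bigr => t _.
  by rewrite mulr1; ring.
rewrite card_sum -/(a_ R J1 v) -a_mu; ring.
Qed.

Lemma group (f : T1 -> T2 -> R) :
  \sum_t1 \sum_t2 (J1 t1 == J2 t2)%:R * f t1 t2 =
  \sum_v \sum_(t1 | J1 t1 == v) \sum_(t2 | J2 t2 == v) f t1 t2.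
Proof.
rewrite (partition_big J1 predT) //=; apply: eq_bigr => v _.
apply: eq_bigr => t1 /eqP <-.
rewrite [RHS]big_mkcond; apply: eq_bigr => t2 _.
by rewrite eq_sym; case: eqP => _; rewrite ?mul1r ?mul0r.
Qed.

Lemma delta_sum (T : finType) (J : T -> U) (x y : T -> R) (al be : R) v v' :
  \sum_(t | J t == v) \sum_(t' | J t' == v') x t * y t' * (if t == t' then al else be)
  = be * (\sum_(t | J t == v) x t) * (\sum_(t' | J t' == v') y t')
    + (v == v')%:R * (al - be) * \sum_(t | J t == v) x t * y t.
Proof.
have E : forall t t' : T, (if t == t' then al else be) = be + (t == t')%:R * (al - be).
  by move=> t t'; case: (t == t'); rewrite ?mul1r ?mul0r; ring.
under eq_bigr => t _ do under eq_bigr => t' _ do rewrite E mulrDr.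
under eq_bigr => t _ do rewrite big_split /=.
rewrite big_split /=; congr (_ + _).
  rewrite -mulrA mulr_suml mulr_sumr; apply: eq_bigr => t _.
  rewrite mulr_sumr mulr_sumr; apply: eq_bigr => t' _; ring.
rewrite mulr_sumr; apply: eq_bigr => t /eqP Jt.
rewrite big_mkcond (bigD1 t) //= eqxx Jt big1 ?addr0.
  by case: (v == v'); rewrite ?mul1r ?mul0r /=; ring.
by move=> t' /negbTE; rewrite eq_sym => ->; case: ifP => _; rewrite ?mul0r ?mulr0.
Qed.

Lemma sum_delta (F : U -> R) v : \sum_v' (v == v')%:R * F v' = F v.
Proof.
rewrite (bigD1 v) //= eqxx mul1r big1 ?addr0 // => v' /negbTE.
by rewrite eq_sym => ->; rewrite mul0r.
Qed.

Lemma pairE (G : T1 * T2 -> R) : \sum_k G k = \sum_t1 \sum_t2 G (t1, t2).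
Proof. by rewrite pair_bigA; apply: eq_bigr => -[]. Qed.

Definition Av v := \sum_(t | J1 t == v) W t.
Definition Sv v := \sum_(t | J1 t == v) W t ^+ 2.
Definition bv v := \sum_(t | J2 t == v) (1 : R).

Lemma alg (c p q1 q2 : R) :
 \sum_(k : T1 * T2) \sum_(k' : T1 * T2)
   (c * ((J1 k.1 == J2 k.2)%:R * W k.1)) * (c * ((J1 k'.1 == J2 k'.2)%:R * W k'.1)) *
   ((if J1 k.1 == J1 k'.1 then p else p ^+ 2) * (if k.1 == k'.1 then q1 else q1 ^+ 2) *
    (if k.2 == k'.2 then q2 else q2 ^+ 2))
 - (\sum_(k : T1 * T2) c * ((J1 k.1 == J2 k.2)%:R * W k.1) * (p * q1 * q2)) ^+ 2
 = \sum_v (c ^+ 2 * p * (q1 ^+ 2 * Av v ^+ 2 + (q1 - q1 ^+ 2) * Sv v) *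
              (q2 ^+ 2 * bv v ^+ 2 + (q2 - q2 ^+ 2) * bv v)
           - c ^+ 2 * p ^+ 2 * q1 ^+ 2 * q2 ^+ 2 * Av v ^+ 2 * bv v ^+ 2).
Proof.
set K := c * p * q1 * q2.
have Em : \sum_(k : T1 * T2) c * ((J1 k.1 == J2 k.2)%:R * W k.1) * (p * q1 * q2)
    = \sum_v K * Av v * bv v.
  rewrite pairE.
  have E : forall t1 t2, c * ((J1 t1 == J2 t2)%:R * W t1) * (p * q1 * q2) =
     (J1 t1 == J2 t2)%:R * (K * W t1) by move=> t1 t2; rewrite /K; ring.
  under eq_bigr => t1 _ do under eq_bigr => t2 _ do rewrite /= E.
  rewrite group; apply: eq_bigr => v _.
  rewrite /Av /bv -mulrA mulr_suml mulr_sumr; apply: eq_bigr => t1 _.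
  by rewrite mulrA mulr_sumr; apply: eq_bigr => t2 _; rewrite mulr1.
rewrite Em; clear Em.
rewrite pairE.
under eq_bigr => t1 _ do under eq_bigr => t2 _ do rewrite pairE /=.
pose F (t1 : T1) (t2 : T2) (t0 : T1) (t3 : T2) :=
  c ^+ 2 * W t1 * W t0 * ((if J1 t1 == J1 t0 then p else p ^+ 2) *
     (if t1 == t0 then q1 else q1 ^+ 2) * (if t2 == t3 then q2 else q2 ^+ 2)).
have E2 : forall t1 t2, \sum_t0 \sum_t3
   c * ((J1 t1 == J2 t2)%:R * W t1) * (c * ((J1 t0 == J2 t3)%:R * W t0)) *
   ((if J1 t1 == J1 t0 then p else p ^+ 2) * (if t1 == t0 then q1 else q1 ^+ 2) *
    (if t2 == t3 then q2 else q2 ^+ 2)) =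
   (J1 t1 == J2 t2)%:R * \sum_t0 \sum_t3 (J1 t0 == J2 t3)%:R * F t1 t2 t0 t3.
  move=> t1 t2; rewrite mulr_sumr; apply: eq_bigr => t0 _.
  rewrite mulr_sumr; apply: eq_bigr => t3 _; rewrite /F; ring.
under eq_bigr => t1 _ do under eq_bigr => t2 _ do rewrite E2.
rewrite group.
under eq_bigr => v _ do under eq_bigr => t1 _ do under eq_bigr => t2 _ do rewrite group.
pose G1 v v0 := \sum_(t1 | J1 t1 == v) \sum_(t0 | J1 t0 == v0)
   W t1 * W t0 * (if t1 == t0 then q1 else q1 ^+ 2).
pose G2 v v0 := \sum_(t2 | J2 t2 == v) \sum_(t3 | J2 t3 == v0)
   (fun=> 1 : R) t2 * (fun=> 1 : R) t3 * (if t2 == t3 then q2 else q2 ^+ 2).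
have E3 : forall v, \sum_(t1 | J1 t1 == v) \sum_(t2 | J2 t2 == v) \sum_v0
   \sum_(t0 | J1 t0 == v0) \sum_(t3 | J2 t3 == v0) F t1 t2 t0 t3 =
   \sum_v0 c ^+ 2 * (if v == v0 then p else p ^+ 2) * G1 v v0 * G2 v v0.
  move=> v; under eq_bigr => t1 _ do rewrite exchange_big.
  rewrite exchange_big; apply: eq_bigr => v0 _.
  under eq_bigr => t1 _ do rewrite exchange_big.
  rewrite -mulrA mulr_suml mulr_sumr; apply: eq_bigr => t1 /eqP Jt1.
  rewrite mulr_suml mulr_sumr; apply: eq_bigr => t0 /eqP Jt0.
  rewrite mulr_sumr mulr_sumr; apply: eq_bigr => t2 _.
  rewrite mulr_sumr mulr_sumr; apply: eq_bigr => t3 _.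
  rewrite /F Jt1 Jt0; ring.
under eq_bigr => v _ do rewrite E3.
pose Y v := c ^+ 2 * p * (q1 ^+ 2 * Av v ^+ 2 + (q1 - q1 ^+ 2) * Sv v) *
      (q2 ^+ 2 * bv v ^+ 2 + (q2 - q2 ^+ 2) * bv v) -
      c ^+ 2 * p ^+ 2 * q1 ^+ 2 * q2 ^+ 2 * Av v ^+ 2 * bv v ^+ 2.
pose Z v v0 := (K * Av v * bv v) * (K * Av v0 * bv v0).
have SvE : forall v, \sum_(t | J1 t == v) W t * W t = Sv v.
  by move=> v; apply: eq_bigr => t _; rewrite expr2.
have bvE : forall v, \sum_(t | J2 t == v) (1 : R) * 1 = bv v.
  by move=> v; apply: eq_bigr => t _; rewrite mulr1.
have E4 : forall v v0, c ^+ 2 * (if v == v0 then p else p ^+ 2) * G1 v v0 * G2 v v0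
    = Z v v0 + (v == v0)%:R * Y v0.
  move=> v v0; rewrite /G1 /G2 !delta_sum /= -/(Av v) -/(Av v0) -/(bv v) -/(bv v0) SvE bvE.
  rewrite /Z /Y /K.
  by have [<-|ne] := eqVneq v v0; rewrite /=; ring.
under eq_bigr => v _ do under eq_bigr => v0 _ do rewrite E4.
under eq_bigr => v _ do rewrite big_split /= sum_delta.
rewrite big_split /=.
have -> : (\sum_v K * Av v * bv v) ^+ 2 = \sum_v \sum_v0 Z v v0.
  rewrite expr2 mulr_suml; apply: eq_bigr => v _; rewrite mulr_sumr //.
rewrite addrAC subrr add0r //.
Qed.
End Alg.

Theorem theorem7 (R : realType) (d : measure_display) (Omega : measurableType d)
  (P : probability Omega R)
  (U T1 T2 : finType) (J1 : T1 -> U) (J2 : T2 -> U) (W : T1 -> R)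
  (e1 e2 p : R)
  (he1 : 0 < e1 <= 1) (he2 : 0 < e2 <= 1)
  (hp : Num.max e1 e2 <= p <= 1)
  (h : U -> Omega -> R) (c1 : T1 -> Omega -> R) (c2 : T2 -> Omega -> R)
  (hmeas : forall i, measurable_fun setT (all_rvs h c1 c2 i))
  (hind : mutually_independent P (all_rvs h c1 c2))
  (hunif : forall v, uniform01 P (h v))
  (hc1 : forall t, bernoulli_coin P (e1 / p) (c1 t))
  (hc2 : forall t, bernoulli_coin P (e2 / p) (c2 t)) :
  'V_P[Jsum_hat J1 J2 W p e1 e2 h c1 c2] =
  ((e2^-1 - p^-1) * beta1 J1 J2 W
   + (e1^-1 - p^-1) * beta2 J1 J2 W
   + (p / (e1 * e2) - e1^-1 - e2^-1 + p^-1) * beta3 J1 J2 W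
   + (p^-1 - 1) * beta4 J1 J2 W)%:E.
Proof.
move: he1 he2 hp => /andP[e1p e11] /andP[e2p e21] /andP[hmax p1].
have ep1 : e1 <= p by apply: le_trans hmax; rewrite le_max lexx.
have p0 : 0 < p by apply: lt_le_trans ep1.
have hu : forall u, P (h u @^-1` [set x | x < p]) = p%:E.
  move=> u; rewrite (hunif u); last exact: measurable_lt.
  have -> : [set x | x < p] `&` `[0%R, 1%R] = [set` `[0%R, p[%R].
    apply/seteqP; split => x /=.
      by rewrite !in_itv /= => -[xp /andP[x0 _]]; rewrite x0 xp.
    rewrite !in_itv /= => /andP[x0 xp]; split => //.
    by rewrite x0 /= (le_trans (ltW xp)).
  by rewrite lebesgue_measure_itv /= lte_fin p0 -EFinB subr0.
have hq1 : forall t, P (c1 t @^-1` [set 1]) = (e1 / p)%:E by move=> t; case: (hc1 t).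
have hq2 : forall t, P (c2 t @^-1` [set 1]) = (e2 / p)%:E by move=> t; case: (hc2 t).
have Xe : Jsum_hat J1 J2 W p e1 e2 h c1 c2 = fun w => \sum_(k : T1 * T2)
    (p / (e1 * e2)) * ((J1 k.1 == J2 k.2)%:R * W k.1) * \1_(Ev U T1 T2 J1 p h c1 c2 k) w.
  apply/funext => w; rewrite /Jsum_hat pairE mulr_sumr; apply: eq_bigr => t1 _.
  rewrite mulr_sumr big_mkcond; apply: eq_bigr => t2 _ /=.
  case: eqP => [E|_]; last by rewrite mul0r mulr0 mul0r.
  rewrite -E /indic.
  have -> : (w \in Ev U T1 T2 J1 p h c1 c2 (t1, t2)) =
      (h (J1 t1) w < p) && (c1 t1 w == 1) && (c2 t2 w == 1).
    apply/idP/idP => [/set_mem [H1 [H2 H3]]|/andP[/andP[H1 /eqP H2] /eqP H3]].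
      by rewrite H1 H2 H3 eqxx.
    exact: mem_set.
  by case: (h (J1 t1) w < p); case: (c1 t1 w == 1); case: (c2 t2 w == 1);
    rewrite /= ?mul1r ?mul0r ?mulr1 ?mulr0.
rewrite Xe var_lincomb; last exact: measurable_Ev.
under eq_bigr => k _ do under eq_bigr => k' _ do
  rewrite (P_Ev2 P _ _ _ J1 _ _ _ _ _ _ hind hu hq1 hq2).
under [X in (_ - X ^+ 2)%R]eq_bigr => k _ do
  rewrite -[Ev _ _ _ _ _ _ _ _ k]setIid (P_Ev2 P _ _ _ J1 _ _ _ _ _ _ hind hu hq1 hq2) !eqxx.
rewrite alg.
congr (_%:E).
rewrite /beta1 /beta2 /beta3 /beta4 !mulr_sumr -!big_split /=; apply: eq_bigr => v _.
rewrite /Av /Sv /bv card_sum -a_mu -a_musig /b_.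
have pn : p != 0 by rewrite gt_eqF.
have e1n : e1 != 0 by rewrite gt_eqF.
have e2n : e2 != 0 by rewrite gt_eqF.
by field; rewrite pn e1n e2n.
Qed.
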